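(* Let $\Lambda\in\mathbb{N}$, let $k\ge\Lambda^2(\Lambda+1)^2$, and let $\bm{\chi}=\sum_{m=-\Lambda}^{\Lambda}\cos\!\left(\frac{\pi m}{2\Lambda+2}\right)\psi_m\in\mathcal{H}_\Lambda$. Then $$(\Delta\bm{x})^2_{\bm{\chi}}<\frac{3.5}{(\Lambda+1)^2}.$$
   Context: (Fuzzy circle $S^1_\Lambda$.) $\mathcal{H}_\Lambda$ is a $(2\Lambda+1)$-dimensional Hilbert space with orthonormal basis $\{\psi_n\}_{n=-\Lambda}^{\Lambda}$. Operators: $x_+\psi_n=b_{n+1}\psi_{n+1}$, $x_-\psi_n=b_n\psi_{n-1}$, where $b_n=\sqrt{1+n(n-1)/k}$ if $1-\Lambda\le n\le\Lambda$ and $b_n=0$ otherwise; $x_1=(x_++x_-)/2$, $x_2=(x_+-x_-)/(2i)$, $\bm{x}^2=x_1^2+x_2^2$. For a nonzero vector $\bm{\chi}$, $\langle A\rangle_{\bm\chi}=\langle\bm{\chi},A\bm{\chi}\rangle/\langle\bm\chi,\bm\chi\rangle$ and $(\Delta\bm{x})^2_{\bm\chi}=\langle\bm{x}^2\rangle_{\bm\chi}-\langle x_1\rangle_{\bm\chi}^2-\langle x_2\rangle_{\bm\chi}^2$. *)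

(* Defs.v *)
From Stdlib Require Import Reals ZArith.
From Coquelicot Require Import Coquelicot.
Open Scope R_scope.

(* A vector of H_Lambda is represented by its coefficient function
   n |-> <psi_n, v> on Z; only the indices -Lambda <= n <= Lambda matter
   (the operators below preserve the support [-Lambda, Lambda]). *)
Definition vec := Z -> C.

Definition bcoef (k : R) (Lam : nat) (n : Z) : R :=
  if andb (1 - Z.of_nat Lam <=? n)%Z (n <=? Z.of_nat Lam)%Z
  then sqrt (1 + IZR n * IZR (n - 1) / k) else 0.

(* x_+ psi_n = b_{n+1} psi_{n+1}  ==> (x_+ v)_n = b_n v_{n-1} *)
Definition xplus (k : R) (Lam : nat) (v : vec) : vec :=
  fun n => Cmult (RtoC (bcoef k Lam n)) (v (n - 1)%Z).
(* x_- psi_n = b_n psi_{n-1}  ==> (x_- v)_n = b_{n+1} v_{n+1} *)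
Definition xminus (k : R) (Lam : nat) (v : vec) : vec :=
  fun n => Cmult (RtoC (bcoef k Lam (n + 1)%Z)) (v (n + 1)%Z).

Definition x1 (k : R) (Lam : nat) (v : vec) : vec :=
  fun n => Cdiv (Cplus (xplus k Lam v n) (xminus k Lam v n)) (RtoC 2).
Definition x2 (k : R) (Lam : nat) (v : vec) : vec :=
  fun n => Cdiv (Cminus (xplus k Lam v n) (xminus k Lam v n)) (Cmult (RtoC 2) Ci).
Definition xsq (k : R) (Lam : nat) (v : vec) : vec :=
  fun n => Cplus (x1 k Lam (x1 k Lam v) n) (x2 k Lam (x2 k Lam v) n).

Fixpoint csum (f : nat -> C) (N : nat) : C :=
  match N with
  | O => f O
  | S N' => Cplus (csum f N') (f N)
  end.

Definition inner (Lam : nat) (u v : vec) : C :=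
  csum (fun j => let n := (Z.of_nat j - Z.of_nat Lam)%Z in
                 Cmult (Cconj (u n)) (v n)) (2 * Lam).

Definition expect (Lam : nat) (A : vec -> vec) (chi : vec) : C :=
  Cdiv (inner Lam chi (A chi)) (inner Lam chi chi).

Definition uncert (k : R) (Lam : nat) (chi : vec) : C :=
  Cminus (Cminus (expect Lam (xsq k Lam) chi)
                 (Cmult (expect Lam (x1 k Lam) chi) (expect Lam (x1 k Lam) chi)))
         (Cmult (expect Lam (x2 k Lam) chi) (expect Lam (x2 k Lam) chi)).

Definition chi_state (Lam : nat) : vec :=
  fun n => if andb (- Z.of_nat Lam <=? n)%Z (n <=? Z.of_nat Lam)%Z
           then RtoC (cos (PI * IZR n / (2 * INR Lam + 2))) else RtoC 0.

(* Main.v *)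
Require Import Defs.
From Stdlib Require Import Reals ZArith Lra Lia FunctionalExtensionality.
From Coquelicot Require Import Coquelicot.
Open Scope R_scope.

Lemma Ceq (z w : C) : Re z = Re w -> Im z = Im w -> z = w.
Proof. destruct z, w; simpl; intros; subst; reflexivity. Qed.

Fixpoint rsum (f : nat -> R) (N : nat) : R :=
  match N with O => f O | S N' => rsum f N' + f N end.

Lemma csum_Re f N : Re (csum f N) = rsum (fun j => Re (f j)) N.
Proof. induction N; [reflexivity|]. cbn [csum rsum]. rewrite <- IHN. destruct (csum f N), (f (S N)); reflexivity. Qed.
Lemma csum_Im f N : Im (csum f N) = rsum (fun j => Im (f j)) N.
Proof. induction N; [reflexivity|]. cbn [csum rsum]. rewrite <- IHN. destruct (csum f N), (f (S N)); reflexivity. Qed.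

Lemma rsum_ext f g N : (forall j, (j <= N)%nat -> f j = g j) -> rsum f N = rsum g N.
Proof. induction N; simpl; intros H. apply H; lia. rewrite IHN, H; auto; intros; apply H; lia. Qed.

Lemma rsum_le f g N : (forall j, (j <= N)%nat -> f j <= g j) -> rsum f N <= rsum g N.
Proof. induction N; simpl; intros H. apply H; lia.
  apply Rplus_le_compat; [apply IHN; intros; apply H; lia| apply H; lia]. Qed.

Lemma rsum_lin a f a' g N : rsum (fun j => a * f j + a' * g j) N = a * rsum f N + a' * rsum g N.
Proof. induction N; simpl; [ring| rewrite IHN; ring]. Qed.

Lemma rsum_ge_term f N j0 : (forall j, (j <= N)%nat -> 0 <= f j) -> (j0 <= N)%nat -> f j0 <= rsum f N.
Proof.
  induction N; simpl; intros H Hj.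
  - replace j0 with O by lia; lra.
  - destruct (Nat.eq_dec j0 (S N)) as [->|ne].
    + assert (0 <= rsum f N). { apply Rle_trans with (rsum (fun _ => 0) N).
        clear; induction N; simpl; lra. apply rsum_le; intros; apply H; lia. } lra.
    + assert (f j0 <= rsum f N) by (apply IHN; [intros; apply H; lia| lia]).
      assert (0 <= f (S N)) by (apply H; lia). lra.
Qed.

Lemma rsum_shift (F : Z -> R) (L M : nat) :
  rsum (fun j => F (Z.of_nat j - Z.of_nat L + 1)%Z) M =
  rsum (fun j => F (Z.of_nat j - Z.of_nat L)%Z) M - F (- Z.of_nat L)%Z + F (Z.of_nat M + 1 - Z.of_nat L)%Z.
Proof.
  induction M; cbn [rsum].
  - replace (Z.of_nat 0 - Z.of_nat L + 1)%Z with (Z.of_nat 0 + 1 - Z.of_nat L)%Z by lia.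
    replace (Z.of_nat 0 - Z.of_nat L)%Z with (- Z.of_nat L)%Z by lia. ring.
  - rewrite IHM.
    replace (Z.of_nat M + 1 - Z.of_nat L)%Z with (Z.of_nat (S M) - Z.of_nat L)%Z by lia.
    replace (Z.of_nat (S M) - Z.of_nat L + 1)%Z with (Z.of_nat (S M) + 1 - Z.of_nat L)%Z by lia.
    ring.
Qed.
Lemma PI_ub : PI < 316/100.
Proof.
  destruct (Rlt_or_le PI (316/100)) as [h|h]; [exact h|exfalso].
  assert (H1 : - PI / 2 <= 158/100) by (assert (t:=PI_RGT_0); lra).
  assert (H2 : 158/100 <= PI / 2) by lra.
  destruct (cos_bound (158/100) 1 H1 H2) as [_ Hc].
  assert (Hg := cos_ge_0 (158/100) ltac:(lra) H2).
  unfold cos_approx, cos_term in Hc. cbn [sum_f_R0 Nat.mul Nat.add] in Hc.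
  rewrite !fact_simpl, !mult_INR in Hc. cbn [fact INR] in Hc.
  lra.
Qed.
Section S.
Variable (k : R) (L : nat) (c : Z -> R).
Let b := bcoef k L.
Let v : vec := fun n => RtoC (c n).

Lemma x1_eq n : x1 k L v n = RtoC ((b n * c (n-1) + b (n+1) * c (n+1)) / 2).
Proof.
  unfold x1, xplus, xminus, v, b.
  apply Ceq; unfold Cdiv, Cinv, Cmult, Cplus, RtoC; simpl; field.
Qed.

Lemma x2_eq n : x2 k L v n = (0, (b (n+1) * c (n+1) - b n * c (n-1)) / 2).
Proof.
  unfold x2, xplus, xminus, v, b.
  apply Ceq; unfold Cdiv, Cinv, Cmult, Cminus, Cplus, Copp, Ci, RtoC; simpl; field.
Qed.

Lemma xsq_eq n : xsq k L v n = RtoC ((b n ^ 2 + b (n+1) ^ 2) / 2 * c n).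
Proof.
  unfold xsq, x1, x2, xplus, xminus, v, b.
  rewrite Z.sub_add, Z.add_simpl_r.
  apply Ceq; unfold Cdiv, Cinv, Cmult, Cminus, Cplus, Copp, Ci, RtoC; simpl; field.
Qed.
End S.
Definition gf (L : nat) (n : Z) : R := cos (PI * IZR n / (2 * INR L + 2)).
Definition cr (L : nat) (n : Z) : R :=
  if andb (- Z.of_nat L <=? n)%Z (n <=? Z.of_nat L)%Z then gf L n else 0.

Lemma chi_eq L : chi_state L = fun n => RtoC (cr L n).
Proof. apply functional_extensionality; intro n; unfold chi_state, cr, gf.
  destruct (_ && _)%bool; reflexivity. Qed.

Lemma cr_in L n : (- Z.of_nat L <= n <= Z.of_nat L)%Z -> cr L n = gf L n.
Proof. intros H; unfold cr. replace (_ && _)%bool with true; [reflexivity|].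
  symmetry; apply Bool.andb_true_iff; split; apply Z.leb_le; lia. Qed.

Lemma cr_out L n : ~ (- Z.of_nat L <= n <= Z.of_nat L)%Z -> cr L n = 0.
Proof. intros H; unfold cr. destruct (Z.leb_spec (- Z.of_nat L) n), (Z.leb_spec n (Z.of_nat L)); simpl; auto; lia. Qed.

Lemma IZR_L L : IZR (Z.of_nat L) = INR L.
Proof. rewrite INR_IZR_INZ; reflexivity. Qed.

Lemma gf_ge0 L n : (- Z.of_nat L <= n <= Z.of_nat L)%Z -> 0 <= gf L n.
Proof. intros H. unfold gf. assert (h1 : (- Z.of_nat L <= n)%Z) by lia.
  assert (h2 : (n <= Z.of_nat L)%Z) by lia.
  apply IZR_le in h1; apply IZR_le in h2. rewrite opp_IZR, IZR_L in h1. rewrite IZR_L in h2.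
  assert (hL := pos_INR L). assert (hP := PI_RGT_0).
  apply cos_ge_0.
  - apply Rle_trans with (PI * (- INR L) / (2 * INR L + 2)).
    + apply Rmult_le_reg_r with (2 * INR L + 2); [lra|]. field_simplify; try lra; nra.
    + unfold Rdiv; apply Rmult_le_compat_r; [apply Rlt_le, Rinv_0_lt_compat; lra|]. nra.
  - apply Rle_trans with (PI * (INR L) / (2 * INR L + 2)).
    + unfold Rdiv; apply Rmult_le_compat_r; [apply Rlt_le, Rinv_0_lt_compat; lra|]. nra.
    + apply Rmult_le_reg_r with (2 * INR L + 2); [lra|]. field_simplify; try lra; nra.
Qed.

Lemma cr_ge0 L n : 0 <= cr L n.
Proof. destruct (Z_le_dec (- Z.of_nat L) n); destruct (Z_le_dec n (Z.of_nat L)).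
  - rewrite cr_in by lia; apply gf_ge0; lia.
  all: rewrite cr_out by lia; lra. Qed.

Lemma gf_top L : gf L (Z.of_nat L + 1) = 0.
Proof. unfold gf. rewrite plus_IZR, IZR_L. replace (PI * (INR L + 1) / (2 * INR L + 2)) with (PI/2).
  apply cos_PI2. assert (hL := pos_INR L). field. lra. Qed.
Lemma gf_bot L : gf L (- Z.of_nat L - 1) = 0.
Proof. unfold gf. rewrite minus_IZR, opp_IZR, IZR_L. replace (PI * (- INR L - 1) / (2 * INR L + 2)) with (-(PI/2)).
  rewrite cos_neg; apply cos_PI2. assert (hL := pos_INR L). field. lra. Qed.

Lemma cr_gf L n : (- Z.of_nat L - 1 <= n <= Z.of_nat L + 1)%Z -> cr L n = gf L n.
Proof. intros H.
  destruct (Z.eq_dec n (Z.of_nat L + 1)) as [->|n1]. rewrite gf_top, cr_out; [reflexivity|lia].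
  destruct (Z.eq_dec n (- Z.of_nat L - 1)) as [->|n2]. rewrite gf_bot, cr_out; [reflexivity|lia].
  apply cr_in; lia. Qed.

Lemma gf_rec L n : gf L (n - 1) + gf L (n + 1) = 2 * cos (PI / (2 * INR L + 2)) * gf L n.
Proof. unfold gf. rewrite minus_IZR, plus_IZR.
  set (D := 2 * INR L + 2). assert (hD : D <> 0) by (unfold D; assert (hL := pos_INR L); lra).
  replace (PI * (IZR n - 1) / D) with (PI * IZR n / D - PI / D) by (field; auto).
  replace (PI * (IZR n + 1) / D) with (PI * IZR n / D + PI / D) by (field; auto).
  rewrite cos_minus, cos_plus. ring. Qed.

Lemma bsq_le k L m : INR L ^ 2 * (INR L + 1) ^ 2 <= k ->
  bcoef k L m ^ 2 <= 1 + 1 / (INR L + 1) ^ 2.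
Proof. intros hk. unfold bcoef.
  assert (hL := pos_INR L).
  assert (0 < 1 / (INR L + 1) ^ 2) by (apply Rdiv_lt_0_compat; [lra| apply pow_lt; lra]).
  destruct (Z.leb_spec (1 - Z.of_nat L) m), (Z.leb_spec m (Z.of_nat L)); cbn [andb]; try lra.
  assert (L1 : (1 <= L)%nat) by lia. apply le_INR in L1. simpl in L1.
  assert (hmm : 0 <= IZR m * IZR (m - 1)).
  { destruct (Z_le_dec 1 m). apply Rmult_le_pos; apply IZR_le; lia.
    replace (IZR m * IZR (m-1)) with (IZR (-m) * IZR (-(m-1))) by (rewrite !opp_IZR; ring).
    apply Rmult_le_pos; apply IZR_le; lia. }
  assert (hm2 : IZR m * IZR (m - 1) <= INR L ^ 2).
  { assert (a1 : (1 - Z.of_nat L <= m)%Z) by lia. assert (a2 : (m <= Z.of_nat L)%Z) by lia.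
    apply IZR_le in a1; apply IZR_le in a2. rewrite minus_IZR, IZR_L in a1. rewrite IZR_L in a2.
    rewrite minus_IZR. nra. }
  assert (hk0 : 0 < k). { assert (0 < INR L ^ 2 * (INR L + 1) ^ 2) by (apply Rmult_lt_0_compat; apply pow_lt; lra). lra. }
  assert (hx : 0 <= 1 + IZR m * IZR (m - 1) / k) by (assert (0 <= IZR m * IZR (m - 1) / k) by (apply Rdiv_le_0_compat; lra); lra).
  rewrite pow2_sqrt by exact hx.
  apply Rplus_le_compat_l.
  apply Rmult_le_reg_r with (k * (INR L + 1)^2). apply Rmult_lt_0_compat; [lra| apply pow_lt; lra].
  field_simplify; [| lra | lra].
  assert (0 < (INR L + 1) ^ 2) by (apply pow_lt; lra).
  assert (IZR m * IZR (m - 1) * (INR L + 1) ^ 2 <= INR L ^ 2 * (INR L + 1) ^ 2) by (apply Rmult_le_compat_r; lra).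
  lra.
Qed.

Lemma b_ge1 k L m : INR L ^ 2 * (INR L + 1) ^ 2 <= k -> (1 - Z.of_nat L <= m <= Z.of_nat L)%Z ->
  1 <= bcoef k L m.
Proof. intros hk H. unfold bcoef.
  replace (_ && _)%bool with true by (symmetry; apply Bool.andb_true_iff; split; apply Z.leb_le; lia).
  assert (hL := pos_INR L).
  assert (L1 : (1 <= L)%nat) by lia. apply le_INR in L1. simpl in L1.
  assert (hmm : 0 <= IZR m * IZR (m - 1)).
  { destruct (Z_le_dec 1 m). apply Rmult_le_pos; apply IZR_le; lia.
    replace (IZR m * IZR (m-1)) with (IZR (-m) * IZR (-(m-1))) by (rewrite !opp_IZR; ring).
    apply Rmult_le_pos; apply IZR_le; lia. }
  assert (hk0 : 0 < k). { assert (0 < INR L ^ 2 * (INR L + 1) ^ 2) by (apply Rmult_lt_0_compat; apply pow_lt; lra). lra. }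
  assert (0 <= IZR m * IZR (m - 1) / k) by (apply Rdiv_le_0_compat; lra).
  apply Rle_trans with (sqrt 1); [rewrite sqrt_1; lra| apply sqrt_le_1_alt; lra].
Qed.

Lemma b_ge0 k L m : 0 <= bcoef k L m.
Proof. unfold bcoef. destruct (_ && _)%bool; [apply sqrt_pos| lra]. Qed.

Lemma uncert_form N A S B : N <> 0 ->
  Cminus (Cminus (Cdiv (B,0) (N,0)) (Cmult (Cdiv (A,0) (N,0)) (Cdiv (A,0) (N,0))))
    (Cmult (Cdiv (0,S) (N,0)) (Cdiv (0,S) (N,0))) = (B/N - (A/N)^2 + (S/N)^2, 0).
Proof. intros hN. apply Ceq; unfold Cdiv, Cinv, Cmult, Cminus, Cplus, Copp; simpl; field; auto. Qed.

Lemma inner_Re L c w : Re (inner L (fun n => RtoC (c n)) w) =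
  rsum (fun j => c (Z.of_nat j - Z.of_nat L)%Z * Re (w (Z.of_nat j - Z.of_nat L)%Z)) (2 * L).
Proof. unfold inner; rewrite csum_Re; apply rsum_ext; intros j _.
  destruct (w _); unfold Cmult, Cconj, RtoC; simpl; ring. Qed.
Lemma inner_Im L c w : Im (inner L (fun n => RtoC (c n)) w) =
  rsum (fun j => c (Z.of_nat j - Z.of_nat L)%Z * Im (w (Z.of_nat j - Z.of_nat L)%Z)) (2 * L).
Proof. unfold inner; rewrite csum_Im; apply rsum_ext; intros j _.
  destruct (w _); unfold Cmult, Cconj, RtoC; simpl; ring. Qed.

Lemma rsum_0 N : rsum (fun _ => 0) N = 0.
Proof. induction N; simpl; lra. Qed.
Lemma rsum_zero f N : (forall j, (j <= N)%nat -> f j = 0) -> rsum f N = 0.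
Proof. intros H; rewrite <- (rsum_0 N); apply rsum_ext; exact H. Qed.
Lemma zero_rsum f N : (forall j, (j <= N)%nat -> 0 = f j) -> 0 = rsum f N.
Proof. intros H; symmetry; apply rsum_zero; intros; symmetry; auto. Qed.

Theorem mainTheorem7 (Lam : nat) (k : R)
  (hk : INR Lam ^ 2 * (INR Lam + 1) ^ 2 <= k) :
  Im (uncert k Lam (chi_state Lam)) = 0 /\
  Re (uncert k Lam (chi_state Lam)) < (7 / 2) / (INR Lam + 1) ^ 2.
Proof.
  set (L := Lam).
  rewrite chi_eq.
  set (c := cr L). set (b := bcoef k L).
  set (v := fun n => RtoC (c n)).
  set (N := rsum (fun j => c (Z.of_nat j - Z.of_nat L)%Z * c (Z.of_nat j - Z.of_nat L)%Z) (2 * L)).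
  set (A := rsum (fun j => c (Z.of_nat j - Z.of_nat L)%Z *
     ((b (Z.of_nat j - Z.of_nat L)%Z * c (Z.of_nat j - Z.of_nat L - 1)%Z
      + b (Z.of_nat j - Z.of_nat L + 1)%Z * c (Z.of_nat j - Z.of_nat L + 1)%Z) / 2)) (2 * L)).
  set (S := rsum (fun j => c (Z.of_nat j - Z.of_nat L)%Z *
     ((b (Z.of_nat j - Z.of_nat L + 1)%Z * c (Z.of_nat j - Z.of_nat L + 1)%Z
      - b (Z.of_nat j - Z.of_nat L)%Z * c (Z.of_nat j - Z.of_nat L - 1)%Z) / 2)) (2 * L)).
  set (B := rsum (fun j => c (Z.of_nat j - Z.of_nat L)%Z *
     ((b (Z.of_nat j - Z.of_nat L)%Z ^ 2 + b (Z.of_nat j - Z.of_nat L + 1)%Z ^ 2) / 2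
       * c (Z.of_nat j - Z.of_nat L)%Z)) (2 * L)).
  assert (E0 : inner L v v = (N, 0)).
  { unfold v; apply Ceq; [rewrite inner_Re; reflexivity|]. rewrite inner_Im; simpl.
    apply rsum_zero; intros; simpl; ring. }
  assert (E1 : inner L v (x1 k L v) = (A, 0)).
  { unfold v; apply Ceq; [rewrite inner_Re; apply rsum_ext| rewrite inner_Im; apply rsum_zero]; intros;
      rewrite x1_eq; simpl; fold b; ring. }
  assert (E2 : inner L v (x2 k L v) = (0, S)).
  { unfold v; apply Ceq; [rewrite inner_Re; apply rsum_zero| rewrite inner_Im; apply rsum_ext]; intros;
      rewrite x2_eq; simpl; fold b; ring. }
  assert (E3 : inner L v (xsq k L v) = (B, 0)).
  { unfold v; apply Ceq; [rewrite inner_Re; apply rsum_ext| rewrite inner_Im; apply rsum_zero]; intros;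
      rewrite xsq_eq; simpl; fold b; ring. }
  assert (hL := pos_INR L).
  assert (hD : 0 < 2 * INR L + 2) by lra.
  assert (c_ge0 : forall n, 0 <= c n) by (intros; apply cr_ge0).
  assert (hN1 : 1 <= N).
  { unfold N. replace 1 with (c (Z.of_nat L - Z.of_nat L)%Z * c (Z.of_nat L - Z.of_nat L)%Z).
    apply (rsum_ge_term (fun j => c (Z.of_nat j - Z.of_nat L)%Z * c (Z.of_nat j - Z.of_nat L)%Z) (2 * L) L); [intros; apply Rmult_le_pos; apply c_ge0| lia].
    rewrite Z.sub_diag. unfold c; rewrite cr_in by lia. unfold gf.
    replace (PI * IZR 0 / (2 * INR L + 2)) with 0 by (simpl; field; lra). rewrite cos_0; ring. }
  set (P := fun n => c n * b n * c (n - 1)%Z).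
  set (T := rsum (fun j => P (Z.of_nat j - Z.of_nat L)%Z) (2 * L)).
  assert (hP : rsum (fun j => P (Z.of_nat j - Z.of_nat L + 1)%Z) (2 * L) = T).
  { rewrite rsum_shift. fold T. unfold P, c.
    rewrite (cr_out L (- Z.of_nat L - 1)) by lia.
    rewrite (cr_out L (Z.of_nat (2 * L) + 1 - Z.of_nat L)) by lia. ring. }
  assert (hA : A = T).
  { unfold A. rewrite (rsum_ext _ (fun j => /2 * P (Z.of_nat j - Z.of_nat L)%Z + /2 * P (Z.of_nat j - Z.of_nat L + 1)%Z)).
    rewrite rsum_lin, hP. fold T. field.
    intros j _. unfold P. rewrite Z.add_simpl_r. field. }
  assert (hS : S = 0).
  { unfold S. rewrite (rsum_ext _ (fun j => /2 * P (Z.of_nat j - Z.of_nat L + 1)%Z + (- /2) * P (Z.of_nat j - Z.of_nat L)%Z)).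
    rewrite rsum_lin, hP. fold T. field.
    intros j _. unfold P. rewrite Z.add_simpl_r. field. }
  set (F := fun n => c n * c (n - 1)%Z).
  set (Q := rsum (fun j => F (Z.of_nat j - Z.of_nat L)%Z) (2 * L)).
  set (th := PI / (2 * INR L + 2)).
  assert (hF : rsum (fun j => F (Z.of_nat j - Z.of_nat L + 1)%Z) (2 * L) = Q).
  { rewrite rsum_shift. fold Q. unfold F, c.
    rewrite (cr_out L (- Z.of_nat L - 1)) by lia.
    rewrite (cr_out L (Z.of_nat (2 * L) + 1 - Z.of_nat L)) by lia. ring. }
  assert (hQ : Q = cos th * N).
  { assert (H : rsum (fun j => 1 * F (Z.of_nat j - Z.of_nat L)%Z + 1 * F (Z.of_nat j - Z.of_nat L + 1)%Z) (2 * L)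
              = rsum (fun j => (2 * cos th) * (c (Z.of_nat j - Z.of_nat L)%Z * c (Z.of_nat j - Z.of_nat L)%Z) + 0 * 0) (2 * L)).
    { apply rsum_ext. intros j hj. unfold F. rewrite Z.add_simpl_r.
      set (n := (Z.of_nat j - Z.of_nat L)%Z).
      unfold c. rewrite (cr_gf L (n - 1)), (cr_gf L (n + 1)), (cr_gf L n) by (unfold n; lia).
      pose proof (gf_rec L n) as G. fold th in G. nra. }
    rewrite !rsum_lin, hF in H. fold Q N in H. lra. }
  assert (hT : Q <= T).
  { apply rsum_le. intros j _. unfold F, P. set (n := (Z.of_nat j - Z.of_nat L)%Z).
    destruct (Z_le_dec (1 - Z.of_nat L) n); destruct (Z_le_dec n (Z.of_nat L)).
    - assert (1 <= b n) by (apply b_ge1; [exact hk| lia]).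
      assert (0 <= c n * c (n-1)%Z) by (apply Rmult_le_pos; auto).
      replace (c n * b n * c (n-1)%Z) with (b n * (c n * c (n-1)%Z)) by ring. nra.
    - unfold c; rewrite (cr_out L n) by lia. lra.
    - unfold c; rewrite (cr_out L (n - 1)) by lia. lra.
    - unfold c; rewrite (cr_out L n) by lia. lra. }
  set (w := 1 / (INR L + 1) ^ 2).
  assert (hB : B <= (1 + w) * N).
  { unfold B, N. rewrite <- (Rplus_0_r ((1 + w) * _)), <- (Rmult_0_l (rsum (fun _ => 0) (2 * L))), <- rsum_lin.
    apply rsum_le. intros j _. set (n := (Z.of_nat j - Z.of_nat L)%Z).
    pose proof (bsq_le k L n hk). pose proof (bsq_le k L (n + 1)%Z hk). fold b w in H, H0.
    pose proof (c_ge0 n). nra. }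
  assert (hw : 0 < w) by (unfold w; apply Rdiv_lt_0_compat; [lra| apply pow_lt; lra]).
  assert (hth : 0 < th) by (unfold th; apply Rdiv_lt_0_compat; [apply PI_RGT_0| lra]).
  assert (hth2 : th <= PI / 2).
  { unfold th. apply Rmult_le_reg_r with (2 * INR L + 2); [lra|]. field_simplify; try lra.
    pose proof PI_RGT_0. nra. }
  assert (hco : 0 <= cos th) by (apply cos_ge_0; pose proof PI_RGT_0; lra).
  assert (hsin : sin th < th) by (apply sin_lt_x; lra).
  assert (hsin0 : 0 < sin th) by (apply sin_gt_0; pose proof PI_RGT_0; lra).
  assert (hsc : sin th ^ 2 + cos th ^ 2 = 1) by (pose proof (sin2_cos2 th); unfold Rsqr in H; lra).
  assert (hthw : th ^ 2 = PI ^ 2 / 4 * w) by (unfold th, w; field; lra).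
  assert (hpi := PI_ub). assert (hpi0 := PI_RGT_0).
  unfold uncert, expect. rewrite E0, E1, E2, E3, uncert_form by lra. unfold Re, Im; cbn [fst snd].
  split; [reflexivity|].
  rewrite hA, hS.
  assert (hTN : cos th <= T / N).
  { apply Rmult_le_reg_r with N; [lra|]. field_simplify; lra. }
  assert (hBN : B / N <= 1 + w).
  { apply Rmult_le_reg_r with N; [lra|]. field_simplify; lra. }
  assert (cos th ^ 2 <= (T / N) ^ 2) by nra.
  assert (sin th ^ 2 < th ^ 2) by nra.
  assert (PI ^ 2 < 10) by nra.
  replace (7 / 2 / (INR L + 1) ^ 2) with (7 / 2 * w) by (unfold w; field; lra).
  assert (PI ^ 2 / 4 * w < 10 / 4 * w) by (apply Rmult_lt_compat_r; lra).
  replace ((0 / N) ^ 2) with 0 by (field; lra).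
  lra.
Qed.
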